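(* Let $d\ge2$, $L\ge2$, $\sigma>0$, and $\lambda\in\,]0,\lambda^\star(\sigma,L)]$. Let $\mathcal{R}^<(\kappa_0,\kappa_1)=A(\kappa_0^4+\kappa_1^4)+B(\kappa_0^2+\kappa_1^2)+C\kappa_0^2\kappa_1^2+D$ on $[-1,1]^2$. Then every $(\kappa_0,\kappa_1)\in[-1,1]^2$ satisfying $$(1-\kappa_0^2)\,\partial_{\kappa_0}\mathcal{R}^<(\kappa_0,\kappa_1)=0,\qquad(1-\kappa_1^2)\,\partial_{\kappa_1}\mathcal{R}^<(\kappa_0,\kappa_1)=0$$ belongs to the set $\{(\pm1,\pm1),(0,\pm1),(\pm1,0),(0,0)\}$.
   Context: With $c_1(n)=1+n\sigma^2$, $c_2(n)=1+\sigma^2(d+n)$: $A=\frac{2\lambda^2}{L^2}c_2(8)+\frac{2\lambda^2(L-1)}{L^2}c_1(5)+\frac{\lambda^2(L-1)}{L^2}c_2(4)+\frac{\lambda^2(L-1)(L-2)}{2L^2}c_1(4)$, $B=-\frac{2\lambda}{L}c_2(4)+\frac{16\lambda^2\sigma^2}{L^2}c_2(6)+\frac{8\lambda^2\sigma^2(L-1)}{L^2}c_1(6)-\frac{\lambda(L-1)}{L}c_1(4)+\frac{4\lambda^2\sigma^2(L-1)}{L^2}c_2(3)+\frac{\lambda^2\sigma^2(L-1)(L-2)}{L^2}c_1(6)$, $C=\frac{4\lambda^2\sigma^2(L-1)}{L^2}$, $D$ a constant not affecting the derivatives. $c_3(\sigma,L)=16\sigma^2c_2(6)+8\sigma^2(L-1)c_1(6)+4\sigma^2(L-1)c_2(3)+\sigma^2(L-1)(L-2)c_1(6)+4c_2(8)+4(L-1)c_1(5)+2(L-1)c_2(4)+(L-1)(L-2)c_1(4)+4\sigma^2(L-1)$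 and $\lambda^\star(\sigma,L)=\frac{2Lc_2(4)+L(L-1)c_1(4)}{c_3(\sigma,L)}$. *)

(* Defs.v *)
From HB Require Import structures.
From mathcomp Require Import all_boot all_order all_algebra.
From mathcomp Require Import all_classical all_reals all_analysis.
Set Implicit Arguments. Unset Strict Implicit. Unset Printing Implicit Defensive.
Import Order.TTheory GRing.Theory Num.Theory.
Local Open Scope ring_scope.

Section Coeffs.
Variable R : realType.
Variables (d L : nat) (sigma lambda : R).

Definition c1 (n : R) : R := 1 + n * sigma ^+ 2.
Definition c2 (n : R) : R := 1 + sigma ^+ 2 * (d%:R + n).

Definition Lr : R := L%:R.

Definition coefA : R :=
  2 * lambda ^+ 2 / Lr ^+ 2 * c2 8
  + 2 * lambda ^+ 2 * (Lr - 1) / Lr ^+ 2 * c1 5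
  + lambda ^+ 2 * (Lr - 1) / Lr ^+ 2 * c2 4
  + lambda ^+ 2 * (Lr - 1) * (Lr - 2) / (2 * Lr ^+ 2) * c1 4.

Definition coefB : R :=
  - (2 * lambda / Lr) * c2 4
  + 16 * lambda ^+ 2 * sigma ^+ 2 / Lr ^+ 2 * c2 6
  + 8 * lambda ^+ 2 * sigma ^+ 2 * (Lr - 1) / Lr ^+ 2 * c1 6
  - lambda * (Lr - 1) / Lr * c1 4
  + 4 * lambda ^+ 2 * sigma ^+ 2 * (Lr - 1) / Lr ^+ 2 * c2 3
  + lambda ^+ 2 * sigma ^+ 2 * (Lr - 1) * (Lr - 2) / Lr ^+ 2 * c1 6.

Definition coefC : R := 4 * lambda ^+ 2 * sigma ^+ 2 * (Lr - 1) / Lr ^+ 2.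

Definition c3 : R :=
  16 * sigma ^+ 2 * c2 6 + 8 * sigma ^+ 2 * (Lr - 1) * c1 6
  + 4 * sigma ^+ 2 * (Lr - 1) * c2 3
  + sigma ^+ 2 * (Lr - 1) * (Lr - 2) * c1 6
  + 4 * c2 8 + 4 * (Lr - 1) * c1 5 + 2 * (Lr - 1) * c2 4
  + (Lr - 1) * (Lr - 2) * c1 4 + 4 * sigma ^+ 2 * (Lr - 1).

Definition lambda_star : R := (2 * Lr * c2 4 + Lr * (Lr - 1) * c1 4) / c3.

Definition Rlt (D : R) (k0 k1 : R) : R :=
  coefA * (k0 ^+ 4 + k1 ^+ 4) + coefB * (k0 ^+ 2 + k1 ^+ 2)
  + coefC * k0 ^+ 2 * k1 ^+ 2 + D.

End Coeffs.

(* Main.v *)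
Require Import Defs.
From HB Require Import structures.
From mathcomp Require Import all_boot all_order all_algebra.
From mathcomp Require Import all_classical all_reals all_analysis.
From mathcomp Require Import ring lra.
Import Order.TTheory GRing.Theory Num.Theory.
Local Open Scope ring_scope.

Lemma dpoly (R : realType) (a b c x : R) :
  derive1 (fun x => a * x ^+ 4 + b * x ^+ 2 + c) x = 4 * a * x ^+ 3 + 2 * b * x.
Proof. rewrite derive1E derive_val /GRing.scale /=. ring. Qed.

Lemma coord (R : realType) (A B C k m : R) :
  0 < A -> 0 <= C -> 2 * A + B + C <= 0 -> m ^+ 2 <= 1 ->
  -1 <= k <= 1 ->
  (1 - k ^+ 2) * (4 * A * k ^+ 3 + 2 * (B + C * m ^+ 2) * k) = 0 ->
  k \in [:: 1; -1; 0].
Proof.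
move=> HA HC Hs Hm /andP[k1 k2] H.
have E : (1 - k ^+ 2) * (4 * A * k ^+ 3 + 2 * (B + C * m ^+ 2) * k)
   = 2 * k * ((1 - k) * ((1 + k) * (2 * A * k ^+ 2 + B + C * m ^+ 2))) by ring.
move: H; rewrite E => /eqP; rewrite !mulf_eq0 => /orP[/orP[]|/orP[|/orP[]]].
- by rewrite pnatr_eq0.
- by move=> /eqP ->; rewrite !inE ?eqxx ?orbT.
- move=> /eqP h; have -> : k = 1 by lra.
  by rewrite !inE ?eqxx.
- move=> /eqP h; have -> : k = -1 by lra.
  by rewrite !inE ?eqxx ?orbT.
move=> /eqP H.
have [k0|k0] := eqVneq k 0; first by rewrite k0 !inE ?eqxx ?orbT.
have [ke|ke] := eqVneq k 1; first by rewrite ke !inE ?eqxx.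
have [ke'|ke'] := eqVneq k (-1); first by rewrite ke' !inE ?eqxx ?orbT.
have kl : k < 1 by rewrite lt_neqAle ke k2.
have kg : -1 < k by rewrite lt_neqAle eq_sym ke' k1.
have k2l : k ^+ 2 < 1 by rewrite expr2; nra.
have : C * m ^+ 2 <= C by rewrite -[X in _ <= X]mulr1 ler_wpM2l.
have : A * k ^+ 2 < A by rewrite -[X in _ < X]mulr1 ltr_pM2l.
lra.
Qed.

Theorem proposition12 (R : realType) (d L : nat) (sigma lambda D : R) :
  (2 <= d)%N -> (2 <= L)%N -> 0 < sigma ->
  0 < lambda -> lambda <= lambda_star d L sigma ->
  forall k0 k1 : R, -1 <= k0 <= 1 -> -1 <= k1 <= 1 ->
  (1 - k0 ^+ 2) * derive1 (fun x => Rlt d L sigma lambda D x k1) k0 = 0 ->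
  (1 - k1 ^+ 2) * derive1 (fun y => Rlt d L sigma lambda D k0 y) k1 = 0 ->
  (k0 \in [:: 1; -1; 0]) && (k1 \in [:: 1; -1; 0]).
Proof.
move=> Hd HL Hs Hl Hls k0 k1 Hk0 Hk1 E0 E1.
set A := coefA d L sigma lambda.
set B := Defs.coefB d L sigma lambda.
set C := Defs.coefC L sigma lambda.
have D0 : forall m, derive1 (fun x => Rlt d L sigma lambda D x m)
   = derive1 (fun x => A * x ^+ 4 + (B + C * m ^+ 2) * x ^+ 2 + (A * m ^+ 4 + B * m ^+ 2 + D)).
  move=> m; congr derive1; apply/funext => x; rewrite /Rlt -/A -/B -/C; ring.
have D1 : forall m, derive1 (fun y => Rlt d L sigma lambda D m y)
   = derive1 (fun x => A * x ^+ 4 + (B + C * m ^+ 2) * x ^+ 2 + (A * m ^+ 4 + B * m ^+ 2 + D)).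
  move=> m; congr derive1; apply/funext => x; rewrite /Rlt -/A -/B -/C; ring.
rewrite D0 dpoly in E0; rewrite D1 dpoly in E1.
have dr : 2 <= d%:R :> R by rewrite (ler_nat R 2 d).
have Lr2 : 2 <= L%:R :> R by rewrite (ler_nat R 2 L).
set s := sigma ^+ 2.
have s0 : 0 < s by rewrite exprn_gt0.
set l := L%:R : R.
set e := d%:R : R.
have l0 : l != 0 by apply/eqP => h; move: Lr2; rewrite -/l h; lra.
have c1p : forall n : R, 0 <= n -> 1 <= c1 sigma n.
  by move=> n n0; rewrite /c1 -/s; have := mulr_ge0 n0 (ltW s0); lra.
have c2p : forall n : R, 0 <= n -> 1 <= c2 d sigma n.
  move=> n n0; rewrite /c2 -/s -/e.
  have : 0 <= s * (e + n) by apply: mulr_ge0; lra.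
  lra.
have u0 : 0 <= l - 1 by lra.
have v0 : 0 <= l - 2 by lra.
set P := 2 * c2 d sigma 8 + 2 * (l - 1) * c1 sigma 5 + (l - 1) * c2 d sigma 4
   + (l - 1) * (l - 2) / 2 * c1 sigma 4.
have AP : A = lambda ^+ 2 / l ^+ 2 * P.
  by rewrite /A /coefA /P /Lr -/l; field.
have P0 : 0 < P.
  have h1 := c2p 8 ltac:(lra). have h2 := c1p 5 ltac:(lra).
  have h3 := c2p 4 ltac:(lra). have h4 := c1p 4 ltac:(lra).
  have : 0 <= (l - 1) * c1 sigma 5 by apply: mulr_ge0; lra.
  have : 0 <= (l - 1) * c2 d sigma 4 by apply: mulr_ge0; lra.
  have : 0 <= (l - 1) * (l - 2) * c1 sigma 4 by apply: mulr_ge0; [apply: mulr_ge0|]; lra.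
  rewrite /P; lra.
have HA : 0 < A.
  by rewrite AP; apply: mulr_gt0 => //; apply: divr_gt0; rewrite exprn_gt0 //; lra.
have HC : 0 <= C.
  rewrite /C /Defs.coefC /Lr -/l -/s; apply: divr_ge0; last by rewrite exprn_ge0 //; lra.
  apply: mulr_ge0 => //; apply: mulr_ge0; [apply: mulr_ge0; [lra|]; apply: exprn_ge0; lra|lra].
set N := 2 * l * c2 d sigma 4 + l * (l - 1) * c1 sigma 4.
have c3p : 0 < c3 d L sigma.
  have h1 := c2p 8 ltac:(lra). have h2 := c1p 5 ltac:(lra).
  have h3 := c2p 4 ltac:(lra). have h4 := c1p 4 ltac:(lra).
  have h5 := c2p 6 ltac:(lra). have h6 := c1p 6 ltac:(lra).
  have h7 := c2p 3 ltac:(lra).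
  rewrite /c3 /Lr -/l -/s.
  have : 0 <= 16 * s * c2 d sigma 6 by apply: mulr_ge0; lra.
  have : 0 <= 8 * s * (l - 1) * c1 sigma 6 by apply: mulr_ge0; [apply: mulr_ge0|]; lra.
  have : 0 <= 4 * s * (l - 1) * c2 d sigma 3 by apply: mulr_ge0; [apply: mulr_ge0|]; lra.
  have : 0 <= s * (l - 1) * (l - 2) * c1 sigma 6.
    by apply: mulr_ge0; [apply: mulr_ge0; [apply: mulr_ge0|]|]; lra.
  have : 0 <= 4 * (l - 1) * c1 sigma 5 by apply: mulr_ge0; lra.
  have : 0 <= 2 * (l - 1) * c2 d sigma 4 by apply: mulr_ge0; lra.
  have : 0 <= (l - 1) * (l - 2) * c1 sigma 4 by apply: mulr_ge0; [apply: mulr_ge0|]; lra.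
  have : 0 <= 4 * s * (l - 1) by apply: mulr_ge0; lra.
  lra.
have Hsum : 2 * A + B + C = lambda / l ^+ 2 * (lambda * c3 d L sigma - N).
  by rewrite /A /B /C /coefA /Defs.coefB /Defs.coefC /N /c3 /Lr -/l -/s; field.
have HN : lambda * c3 d L sigma <= N.
  by move: Hls; rewrite /lambda_star /Lr -/l -/N ler_pdivlMr.
have Hs2 : 2 * A + B + C <= 0.
  rewrite Hsum; apply: mulr_ge0_le0; last by lra.
  by apply: divr_ge0; [lra|]; apply: exprn_ge0; lra.
have sq : forall k : R, -1 <= k <= 1 -> k ^+ 2 <= 1.
  by move=> k /andP[a b]; rewrite expr2; nra.
by rewrite (@coord R A B C k0 k1 HA HC Hs2 (sq _ Hk1) Hk0 E0) (@coord R A B C k1 k0 HA HC Hs2 (sq _ Hk0) Hk1 E1).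
Qed.
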